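(* Let $\alpha\in\mathbb{R}$ and $\mathbb{Q}[x]^+_{x=\alpha}=\{p\in\mathbb{Q}[x]:p(\alpha)>0\}$. For real $\beta\neq\gamma$ let $S_{\beta,\gamma}=\{p\in\mathbb{Q}[x]: p(\beta)>p(\gamma)\}$; for $z\in\mathbb{C}\setminus\mathbb{R}$ let $S_{z,\bar z}=\{p\in\mathbb{Q}[x]:\operatorname{Im}p(z)>0\}$; for $\delta\in\mathbb{R}$ let $S^+_\delta=\{p\in\mathbb{Q}[x]:p'(\delta)>0\}$ and $S^-_\delta=\{p\in\mathbb{Q}[x]:p'(\delta)<0\}$. Then: (1) for all $\beta,\gamma\in\mathbb{R}\setminus\{\alpha\}$ with $\beta\ne\gamma$, the set $S_{\beta,\gamma}\cap\mathbb{Q}[x]^+_{x=\alpha}$ is not closed under multiplication; moreover, for every $\beta\neq\alpha$, the set $S_{\alpha,\beta}\cap\mathbb{Q}[x]^+_{x=\alpha}$ is not closed under multiplication; (2) for every $z\in\mathbb{C}\setminus\mathbb{R}$, the set $S_{z,\bar z}\cap\mathbb{Q}[x]^+_{x=\alpha}$ is not closed under multiplication; (3) for every real $\delta\neq\alpha$, neither $S^+_\delta\cap\mathbb{Q}[x]^+_{x=\alpha}$ nor $S^-_\delta\cap\mathbb{Q}[x]^+_{x=\alpha}$ is closed under multiplication. *)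

(* Defs.v *)
From mathcomp Require Import all_boot all_algebra.
From mathcomp Require Import reals.
From mathcomp.real_closed Require Export complex.
Set Implicit Arguments. Unset Strict Implicit. Unset Printing Implicit Defensive.
Import GRing.Theory Num.Theory.
Local Open Scope ring_scope.

Definition mul_closed (S : {poly rat} -> Prop) : Prop :=
  forall p q : {poly rat}, S p -> S q -> S (p * q).

Definition Qpos_at (R : realType) (alpha : R) (p : {poly rat}) : Prop :=
  0 < (map_poly (ratr : rat -> R) p).[alpha].

Definition S_pair (R : realType) (beta gamma : R) (p : {poly rat}) : Prop :=
  (map_poly (ratr : rat -> R) p).[gamma] < (map_poly (ratr : rat -> R) p).[beta].

Definition S_cplx (R : realType) (z : R[i]) (p : {poly rat}) : Prop :=
  0 < complex.Im (map_poly (ratr : rat -> R[i]) p).[z].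

Definition S_derpos (R : realType) (delta : R) (p : {poly rat}) : Prop :=
  0 < (map_poly (ratr : rat -> R) p^`()).[delta].
Definition S_derneg (R : realType) (delta : R) (p : {poly rat}) : Prop :=
  (map_poly (ratr : rat -> R) p^`()).[delta] < 0.

Definition setI_poly (S T : {poly rat} -> Prop) (p : {poly rat}) : Prop :=
  S p /\ T p.

(* Main.v *)
Require Import Defs.
From mathcomp Require Import all_boot all_order all_algebra.
From mathcomp Require Import reals ring lra.
From mathcomp.real_closed Require Import complex.
Set Implicit Arguments. Unset Strict Implicit. Unset Printing Implicit Defensive.
Import Order.TTheory GRing.Theory Num.Theory.
Local Open Scope ring_scope.
Definition T (w r c : rat) : {poly rat} := w%:P * ('X - r%:P)^+2 + c%:P.

Lemma evT (F : numFieldType) w r c (x : F) :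
  (map_poly (ratr : rat -> F) (T w r c)).[x] = ratr w * (x - ratr r)^+2 + ratr c.
Proof.
by rewrite /T rmorphD rmorphM rmorphXn rmorphB /= map_polyX !map_polyC /= !hornerE.
Qed.

Lemma evM (F : numFieldType) p q (x : F) :
  (map_poly (ratr : rat -> F) (p * q)).[x] =
  (map_poly (ratr : rat -> F) p).[x] * (map_poly (ratr : rat -> F) q).[x].
Proof. by rewrite rmorphM /= hornerM. Qed.

Lemma dT r c : (T 1 r c)^`() = 2%:R *: ('X - r%:P).
Proof.
rewrite /T mul1r derivD derivC addr0 deriv_exp derivXsubC mul1r expr1.
by rewrite -scaler_nat. 
Qed.

Lemma ratr_C (R : realType) (q : rat) : (ratr q : R[i]) = ((ratr q : R)%:C)%C.
Proof. by rewrite -(fmorph_rat (real_complex R)). Qed.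

Lemma approx (R : realType) (m d eta : R) : d != 0 -> 0 < eta ->
  exists r : rat, 0 < d * (m - ratr r) /\ `|m - ratr r| < eta.
Proof.
move=> d0 e0; have [dp|dn] := boolP (0 < d); last rewrite -real_leNgt ?num_real // in dn.
  have [q]:= @rat_in_itvoo R (m - eta) m ltac:(lra).
  rewrite in_itv /= => /andP[h1 h2]; exists q; split.
    by apply: mulr_gt0 => //; lra.
  by rewrite ger0_norm; lra.
have [q]:= @rat_in_itvoo R m (m + eta) ltac:(lra).
rewrite in_itv /= => /andP[h1 h2]; exists q; split.
  have dl : d < 0 by rewrite lt_neqAle d0 dn.
  by rewrite nmulr_rgt0 //; lra.
by rewrite ler0_norm; lra.
Qed.

Lemma evdT (R : realType) r c (x : R) :
  (map_poly (ratr : rat -> R) (T 1 r c)^`()).[x] = 2 * (x - ratr r).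
Proof.
rewrite dT -mul_polyC rmorphM rmorphB /= map_polyX !map_polyC /= !hornerE.
by rewrite rmorph_nat.
Qed.

Lemma ratint (R : realType) (x y : R) : x < y -> exists q : rat, x < ratr q < y.
Proof. by move=> /rat_in_itvoo [q]; rewrite in_itv /=; exists q. Qed.

Lemma sq_lt (R : realType) (x y : R) : `|x| * 2 < `|y| -> x^+2 < (x+y)^+2.
Proof.
have [hx|hx] := lerP 0 x; have [hy|hy] := lerP 0 y;
  rewrite ?(ger0_norm hx) ?(ltr0_norm hx) ?(ger0_norm hy) ?(ltr0_norm hy) => h; nra.
Qed.

Lemma sq_lt2 (R : realType) (x y : R) : `|x| < `|y| -> x^+2 < y^+2.
Proof.
have [hx|hx] := lerP 0 x; have [hy|hy] := lerP 0 y;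
  rewrite ?(ger0_norm hx) ?(ltr0_norm hx) ?(ger0_norm hy) ?(ltr0_norm hy) => h; nra.
Qed.

Lemma part3p (R : realType) (alpha delta : R) : delta != alpha ->
  ~ mul_closed (setI_poly (S_derpos delta) (Qpos_at alpha)).
Proof.
move=> da H.
have e0 : 0 < `|alpha - delta| / 2 by rewrite divr_gt0 // normr_gt0 subr_eq0 eq_sym.
have [r [h1 h2]] := @approx R delta _ _ (oner_neq0 R) e0.
rewrite mul1r in h1.
have h3 : (delta - ratr r)^+2 < (alpha - ratr r)^+2.
  have := @sq_lt R (delta - ratr r) (alpha - delta).
  rewrite (_ : delta - ratr r + (alpha - delta) = alpha - ratr r); last by ring.
  apply; lra.
have [c /andP[c1 c2]] : exists c : rat, -(alpha - ratr r)^+2 < ratr c < -(delta - ratr r)^+2.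
  by apply: ratint; lra.
have P : setI_poly (S_derpos delta) (Qpos_at alpha) (T 1 r c).
  split; rewrite /S_derpos /Qpos_at ?evdT ?evT ?rmorph1 ?mul1r; lra.
have := H _ _ P P; case; rewrite /S_derpos derivM rmorphD /= hornerD !evM evdT evT rmorph1 mul1r.
nra.
Qed.

Lemma part3n (R : realType) (alpha delta : R) : delta != alpha ->
  ~ mul_closed (setI_poly (S_derneg delta) (Qpos_at alpha)).
Proof.
move=> da H.
have e0 : 0 < `|alpha - delta| / 2 by rewrite divr_gt0 // normr_gt0 subr_eq0 eq_sym.
have n1 : (-1 : R) != 0 by rewrite oppr_eq0 oner_neq0.
have [r [h1 h2]] := @approx R delta _ _ n1 e0.
rewrite mulN1r in h1.
have h3 : (delta - ratr r)^+2 < (alpha - ratr r)^+2.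
  have := @sq_lt R (delta - ratr r) (alpha - delta).
  rewrite (_ : delta - ratr r + (alpha - delta) = alpha - ratr r); last by ring.
  apply; lra.
have [c /andP[c1 c2]] : exists c : rat, -(alpha - ratr r)^+2 < ratr c < -(delta - ratr r)^+2.
  by apply: ratint; lra.
have P : setI_poly (S_derneg delta) (Qpos_at alpha) (T 1 r c).
  split; rewrite /S_derneg /Qpos_at ?evdT ?evT ?rmorph1 ?mul1r; lra.
have := H _ _ P P; case; rewrite /S_derneg derivM rmorphD /= hornerD !evM evdT evT rmorph1 mul1r.
nra.
Qed.

Lemma part1b (R : realType) (alpha beta : R) : beta != alpha ->
  ~ mul_closed (setI_poly (S_pair alpha beta) (Qpos_at alpha)).
Proof.
move=> ba H.
have e0 : 0 < `|beta - alpha| / 2 by rewrite divr_gt0 // normr_gt0 subr_eq0.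
have [r [h1 h2]] := @approx R alpha _ _ (oner_neq0 R) e0.
have h3 : (alpha - ratr r)^+2 < (beta - ratr r)^+2.
  have := @sq_lt R (alpha - ratr r) (beta - alpha).
  rewrite (_ : alpha - ratr r + (beta - alpha) = beta - ratr r); last by ring.
  apply; lra.
have [c /andP[c1 c2]] :
  exists c : rat, (alpha - ratr r)^+2 < ratr c < ((alpha - ratr r)^+2 + (beta - ratr r)^+2) / 2.
  apply: ratint; lra.
have P : setI_poly (S_pair alpha beta) (Qpos_at alpha) (T (-1) r c).
  split; rewrite /S_pair /Qpos_at !evT rmorphN1; lra.
have := H _ _ P P; case; rewrite /S_pair !evM !evT rmorphN1.
nra.
Qed.

Lemma part2 (R : realType) (alpha : R) (z : R[i]) : complex.Im z != 0 ->
  ~ mul_closed (setI_poly (S_cplx z) (Qpos_at alpha)).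
Proof.
case: z => u v /= v0 H.
have e0 : 0 < `|v| by rewrite normr_gt0.
have [r [h1 h2]] := @approx R u _ _ v0 e0.
have h3 : (u - ratr r)^+2 < v^+2 by apply: sq_lt2.
have [c /andP[c1 c2]] :
  exists c : rat, - (alpha - ratr r)^+2 < ratr c < v^+2 - (u - ratr r)^+2.
  apply: ratint; have := sqr_ge0 (alpha - ratr r); lra.
have E : (map_poly (ratr : rat -> R[i]) (T 1 r c)).[Complex u v] =
   Complex ((u - ratr r)^+2 - v^+2 + ratr c) (2 * (u - ratr r) * v).
  rewrite evT !ratr_C rmorph1 mul1r /=.
  apply/eqP; rewrite eq_complex /=; apply/andP; split; apply/eqP; lra.
have P : setI_poly (S_cplx (Complex u v)) (Qpos_at alpha) (T 1 r c).
  split; rewrite /S_cplx /Qpos_at ?E ?evT ?rmorph1 ?mul1r /=; lra.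
have := H _ _ P P; case; rewrite /S_cplx evM E /=.
nra.
Qed.

Lemma part1w (R : realType) (a b g : R) (w : rat) :
  (ratr w : R) ^+ 2 = 1 -> 0 < ratr w * ((a - b) * (a - g)) -> b != g ->
  ~ mul_closed (setI_poly (S_pair b g) (Qpos_at a)).
Proof.
move=> W2 K0 bg H.
have W0 : (ratr w : R) != 0.
  by apply/eqP => W0; move: W2; rewrite W0 expr0n /= => /esym/eqP; rewrite oner_eq0.
have Wn : `|ratr w : R| = 1.
  by apply/eqP; rewrite -sqrp_eq1 ?normr_ge0 // -normrX W2 normr1.
have d0 : (ratr w : R) * (b - g) != 0 by rewrite mulf_neq0 // subr_eq0.
have e0 : 0 < ratr w * ((a - b) * (a - g)) / (`|2 * a - b - g| + 1).
  by rewrite divr_gt0 // ltr_pwDr.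
have [r [h1 h2]] := @approx R ((b + g) / 2) _ _ d0 e0.
move: h2; rewrite ltr_pdivlMr ?ltr_pwDr // => h2.
have h4 : ratr w * (ratr r - (b + g) / 2) * (2 * a - b - g) <=
          `|(b + g) / 2 - ratr r| * `|2 * a - b - g|.
  apply: le_trans (ler_norm _) _.
  by rewrite -mulrA normrM Wn mul1r normrM distrC.

have h5 : `|(b + g) / 2 - ratr r| * `|2 * a - b - g| <=
          `|(b + g) / 2 - ratr r| * (`|2 * a - b - g| + 1).
  by rewrite ler_wpM2l ?normr_ge0 // lerDl.
have L : 0 < ratr w * (2 * (a - ratr r)^+2 - (b - ratr r)^+2 - (g - ratr r)^+2).
  have -> : ratr w * (2 * (a - ratr r)^+2 - (b - ratr r)^+2 - (g - ratr r)^+2) =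
    2 * (ratr w * ((a - b) * (a - g))) -
    2 * (ratr w * (ratr r - (b + g) / 2) * (2 * a - b - g)) by field.
  lra.
have D : 0 < ratr w * ((b - ratr r)^+2 - (g - ratr r)^+2).
  have -> : ratr w * ((b - ratr r)^+2 - (g - ratr r)^+2) =
    2 * (ratr w * (b - g) * ((b + g) / 2 - ratr r)) by field.
  lra.
have [c /andP[c1 c2]] : exists c : rat,
    - (ratr w * (a - ratr r)^+2) < ratr c <
    - (ratr w * ((b - ratr r)^+2 + (g - ratr r)^+2)) / 2.
  apply: ratint.
  have -> : ratr w * ((b - ratr r)^+2 + (g - ratr r)^+2) =
    2 * (ratr w * (a - ratr r)^+2) -
    ratr w * (2 * (a - ratr r)^+2 - (b - ratr r)^+2 - (g - ratr r)^+2) by ring.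
  lra.
have P : setI_poly (S_pair b g) (Qpos_at a) (T w r c).
  split; rewrite /S_pair /Qpos_at !evT.
    have -> : ratr w * (b - ratr r)^+2 = ratr w * ((b - ratr r)^+2 - (g - ratr r)^+2)
      + ratr w * (g - ratr r)^+2 by ring.
    lra.
  lra.
have key : forall X Y : R, Y < X -> X + Y < 0 -> Y * Y < X * X -> False.
  by move=> X Y h h' h''; nra.
have := H _ _ P P; case; rewrite /S_pair !evM !evT => hp _.
apply: (key _ _ _ _ hp).
  have -> : ratr w * (b - ratr r)^+2 = ratr w * ((b - ratr r)^+2 - (g - ratr r)^+2)
    + ratr w * (g - ratr r)^+2 by ring.
  lra.
have -> : ratr w * (b - ratr r)^+2 + ratr c + (ratr w * (g - ratr r)^+2 + ratr c) =
  ratr w * ((b - ratr r)^+2 + (g - ratr r)^+2) + 2 * ratr c by ring.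
lra.
Qed.

Lemma part1 (R : realType) (a b g : R) : b != a -> g != a -> b != g ->
  ~ mul_closed (setI_poly (S_pair b g) (Qpos_at a)).
Proof.
move=> ba ga bg.
have nz : (a - b) * (a - g) != 0 by rewrite mulf_neq0 // subr_eq0 eq_sym.
have [pos|neg] := boolP (0 < (a - b) * (a - g)).
  have W1 : (ratr (1 : rat) : R) = 1 by exact: rmorph1.
  by apply: (@part1w R a b g 1 _ _ bg); rewrite W1 ?expr1n ?mul1r.
have W1 : (ratr (-1 : rat) : R) = -1 by exact: rmorphN1.
apply: (@part1w R a b g (-1) _ _ bg); rewrite W1 ?sqrrN ?expr1n // mulN1r oppr_gt0.
by rewrite lt_neqAle nz /= leNgt.
Qed.

Theorem lemma4p14 (R : realType) (alpha : R) :
  (forall beta gamma : R, beta != alpha -> gamma != alpha -> beta != gamma ->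
     ~ mul_closed (setI_poly (S_pair beta gamma) (Qpos_at alpha))) /\
  (forall beta : R, beta != alpha ->
     ~ mul_closed (setI_poly (S_pair alpha beta) (Qpos_at alpha))) /\
  (forall z : R[i], complex.Im z != 0 ->
     ~ mul_closed (setI_poly (S_cplx z) (Qpos_at alpha))) /\
  (forall delta : R, delta != alpha ->
     ~ mul_closed (setI_poly (S_derpos delta) (Qpos_at alpha)) /\
     ~ mul_closed (setI_poly (S_derneg delta) (Qpos_at alpha))).
Proof.
split; first exact: part1.
split; first exact: part1b.
split; first exact: part2.
by move=> d da; split; [exact: part3p | exact: part3n].
Qed.
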